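(* Let $p$ be prime, $n\ge1$, $G=G(p,n)$ the Heisenberg group acting on $X=\mathbb{Z}_p^{n+2}$ by matrix–vector multiplication with permutation representation $V=\mathbb{C}^X$, and let $H=\{(0,0,z):z\in\mathbb{Z}_p\}$ be the center of $G$. Then the coset identification problem for $H$ (given oracle access to the permutation matrix of an unknown $a=(x,y,z)\in G$, determine the coset $aH$, i.e. determine $x$ and $y$) can be solved by a single-query quantum algorithm with success probability $1$.
   Context: $G(p,n)$ is the group of $(n+2)\times(n+2)$ matrices over $\mathbb{Z}_p$ with $1$'s on the diagonal whose only other nonzero entries lie in the first row and last column, identified with triples $(x,y,z)$, $x,y\in\mathbb{Z}_p^n$, $z\in\mathbb{Z}_p$, where $(1,x,z)$ is the first row and $(z,y,1)^T$ the last column. A single-query algorithm consists of $N\ge1$, a unit vector $\psi\in V\otimes\mathbb{C}^N$, a unitary $U_1$ and a POVM indexed by the cosets of $H$; it succeeds with probability $\frac1{|G|}\sum_a\langle\psi_a|E_{aH}|\psi_a\rangle$ where $\psi_a=U_1(\pi(a)\otimes I)\psi$. *)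

(* Defs.v *)
From HB Require Import structures.
From mathcomp Require Import all_boot all_order all_algebra all_fingroup all_field.
Set Implicit Arguments. Unset Strict Implicit. Unset Printing Implicit Defensive.
Import Order.TTheory GRing.Theory Num.Theory.
Local Open Scope ring_scope.

Section LinAlg.
Variable T : finType.

Definition dotp (u v : T -> algC) : algC := \sum_i (u i)^* * v i.

Definition opapp (A : T -> T -> algC) (v : T -> algC) : T -> algC :=
  fun i => \sum_j A i j * v j.

Definition q_unit_vec (v : T -> algC) : Prop := dotp v v = 1.

(* U^* U = I (equivalent to unitarity in finite dimension) *)
Definition q_unitary (U : T -> T -> algC) : Prop :=
  forall i j, \sum_k (U k i)^* * U k j = (i == j)%:R.

(* positive semidefinite: <v, A v> is real and >= 0 for all v *)
Definition q_psd (A : T -> T -> algC) : Prop :=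
  forall v : T -> algC, 0 <= dotp v (opapp A v).

Definition q_povm (I : finType) (S : {set I}) (E : I -> T -> T -> algC) : Prop :=
  (forall c, c \in S -> q_psd (E c)) /\
  (forall i j, \sum_(c in S) E c i j = (i == j)%:R).
End LinAlg.

Definition mat (p n : nat) := 'M['F_p]_(n.+2).

Definition Xsp (p n : nat) := 'cV['F_p]_(n.+2).

Definition heis (p n : nat) : {set mat p n} :=
  [set A : mat p n | [forall i, forall j,
      ((i == j) ==> (A i j == 1)) &&
      (((i != j) && (i != ord0) && (j != ord_max)) ==> (A i j == 0))]].

(* H = {(0,0,z)}: elements of G whose only nonzero off-diagonal entry is at
   (first row, last column) *)
Definition heisH (p n : nat) : {set mat p n} :=
  [set A in heis p n | [forall i, forall j,
      ((i != j) && ~~ ((i == ord0) && (j == ord_max))) ==> (A i j == 0)]].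

Definition lcoset (p n : nat) (a : mat p n) : {set mat p n} :=
  [set a *m h | h in heisH p n].

Definition cosetsH (p n : nat) : {set {set mat p n}} :=
  [set lcoset a | a in heis p n].

(* pi(a) (x) I_N on V (x) C^N, V = C^X, pi(a) e_x = e_{a x} *)
Definition piI (p n N : nat) (a : mat p n) : (Xsp p n * 'I_N) -> (Xsp p n * 'I_N) -> algC :=
  fun yj xk => ((yj.1 == a *m xk.1) && (yj.2 == xk.2))%:R.

Definition psi_a (p n N : nat) (U : (Xsp p n * 'I_N) -> (Xsp p n * 'I_N) -> algC)
  (psi : (Xsp p n * 'I_N) -> algC) (a : mat p n) : (Xsp p n * 'I_N) -> algC :=
  opapp U (opapp (@piI p n N a) psi).

Definition success_prob (p n N : nat) (psi : (Xsp p n * 'I_N) -> algC)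
  (U : (Xsp p n * 'I_N) -> (Xsp p n * 'I_N) -> algC)
  (E : {set mat p n} -> (Xsp p n * 'I_N) -> (Xsp p n * 'I_N) -> algC) : algC :=
  (#|heis p n|%:R)^-1 *
    \sum_(a in heis p n) dotp (psi_a U psi a) (opapp (E (lcoset a)) (psi_a U psi a)).

(* Main.v *)
Require Import Defs.
From HB Require Import structures.
From mathcomp Require Import all_boot all_order all_algebra all_fingroup all_field.
From mathcomp Require Import ring.
Import Order.TTheory GRing.Theory Num.Theory.
Local Open Scope ring_scope.
Set Implicit Arguments. Unset Strict Implicit.

Definition qq (p : nat) := (Zp_trunc (pdiv p)).+2.
Lemma qq_gt0 p : (0 < qq p)%N. Proof. by []. Qed.
Definition om (p : nat) : algC := sval (C_prim_root_exists (qq_gt0 p)).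
Lemma om_prim p : (qq p).-primitive_root (om p).
Proof. exact: svalP (C_prim_root_exists (qq_gt0 p)). Qed.
Definition phi {p} (t : 'F_p) : algC := om p ^+ (nat_of_ord t).

Lemma phiD p (s t : 'F_p) : phi (s + t) = phi s * phi t.
Proof.
rewrite /phi -exprD -(prim_expr_mod (om_prim p)) /=.
rewrite /qq modn_mod; exact: (prim_expr_mod (om_prim p)).
Qed.

Lemma phi0 p : phi (0 : 'F_p) = 1.
Proof. by rewrite /phi expr0. Qed.

Lemma phi1 p : phi (1 : 'F_p) != 1.
Proof.
rewrite /phi /= modn_small //; rewrite -(prim_order_dvd (om_prim p)) dvdn1 /qq.
by [].
Qed.

Lemma om_norm p : `|om p| = 1.
Proof.
apply/eqP; rewrite -(pexpr_eq1 (qq_gt0 p)) ?normr_ge0 //.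
by rewrite -normrX (prim_expr_order (om_prim p)) normr1.
Qed.

Lemma phiN p (t : 'F_p) : phi (- t) * phi t = 1.
Proof. by rewrite -phiD addNr phi0. Qed.

Lemma phi_conj p (t : 'F_p) : (phi t)^* = phi (- t).
Proof.
have h : (phi t)^* * phi t = 1.
  by rewrite -normCKC /phi normrX om_norm expr1n expr1n.
by rewrite -[LHS]mulr1 -(@phiN _ t) mulrCA h mulr1.
Qed.

Lemma shift_zero p (T : finType) (f : T -> algC) (h : T -> T) :
  injective h -> (forall x, f (h x) = phi (1 : 'F_p) * f x) -> \sum_x f x = 0.
Proof.
move=> hi hf; have e : \sum_x f x = phi (1 : 'F_p) * \sum_x f x.
  by rewrite {1}(reindex_inj hi) /= mulr_sumr; apply: eq_bigr => x _; rewrite hf.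
have : (1 - phi (1 : 'F_p)) * \sum_x f x = 0 by rewrite mulrBl mul1r -e subrr.
move/eqP; rewrite mulf_eq0 subr_eq0 eq_sym (negbTE (phi1 p)) /=.
by move/eqP.
Qed.

Definition mid {n} (i : 'I_n.+2) := (i != ord0) && (i != ord_max).
Definition Mv {p n} (v : Xsp p n) : Xsp p n := \col_i (if mid i then v i 0 else 0).
Definition dot {p n} (u v : Xsp p n) : 'F_p := \sum_i u i 0 * v i 0.

Lemma o0m n : (ord0 : 'I_n.+2) != ord_max.
Proof. by rewrite -(inj_eq val_inj). Qed.

Lemma MvD p n (u v : Xsp p n) : Mv (u + v) = Mv u + Mv v.
Proof. by apply/matrixP => i j; rewrite !mxE; case: (mid i); rewrite ?addr0. Qed.
Lemma MvZ p n c (v : Xsp p n) : Mv (c *: v) = c *: Mv v.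
Proof. by apply/matrixP => i j; rewrite !mxE; case: (mid i); rewrite ?mulr0. Qed.
Lemma MvN p n (v : Xsp p n) : Mv (- v) = - Mv v.
Proof. by apply/matrixP => i j; rewrite !mxE; case: (mid i); rewrite ?oppr0. Qed.
Lemma MvB p n (u v : Xsp p n) : Mv (u - v) = Mv u - Mv v.
Proof. by rewrite MvD MvN. Qed.
Lemma MvM p n (v : Xsp p n) : Mv (Mv v) = Mv v.
Proof. by apply/matrixP => i j; rewrite !mxE; case: (mid i). Qed.
Lemma Mv_e0 p n : Mv (delta_mx ord0 0 : Xsp p n) = 0.
Proof.
apply/matrixP => i j; rewrite !mxE /mid; case: (i =P ord0) => [->|/eqP hi] //=.
by case: (_ != _).
Qed.
Lemma Mv_ei p n (i : 'I_n.+2) : mid i -> Mv (delta_mx i 0 : Xsp p n) = delta_mx i 0.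
Proof.
move=> hi; apply/matrixP => k j; rewrite !mxE ord1; case hk: (mid k) => //.
by case: (k =P i) => // E; move: hk; rewrite E hi.
Qed.

Lemma dotC p n (u v : Xsp p n) : dot u v = dot v u.
Proof. by apply: eq_bigr => i _; rewrite mulrC. Qed.
Lemma dotD p n (u v w : Xsp p n) : dot u (v + w) = dot u v + dot u w.
Proof. by rewrite /dot -big_split; apply: eq_bigr => i _; rewrite mxE mulrDr. Qed.
Lemma dotZ p n c (u v : Xsp p n) : dot u (c *: v) = c * dot u v.
Proof. by rewrite /dot mulr_sumr; apply: eq_bigr => i _; rewrite mxE mulrCA. Qed.
Lemma dot_e p n (u : Xsp p n) i : dot u (delta_mx i 0) = u i 0.
Proof.
rewrite /dot (bigD1 i) //= big1 ?addr0 => [|k hk]; rewrite mxE.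
  by rewrite !eqxx mulr1.
by rewrite (negbTE hk) mulr0.
Qed.
Lemma dot0 p n (u : Xsp p n) : dot u 0 = 0.
Proof. by rewrite /dot big1 // => i _; rewrite mxE mulr0. Qed.

Lemma charsum p n (w : Xsp p n) : w != 0 -> \sum_(l : Xsp p n) phi (dot l w) = 0.
Proof.
move=> hw.
have [i Hi] : exists i, w i 0 != 0.
  apply/existsP; apply: contraNT hw => /existsPn H; apply/eqP/matrixP => i j.
  by rewrite ord1 mxE; apply/eqP/negbNE/H.
pose s : Xsp p n := (w i 0)^-1 *: delta_mx i 0.
apply: (@shift_zero p _ _ (fun l => l + s)); first exact: addIr.
move=> l /=; rewrite dotC dotD dotC phiD mulrC; congr (_ * _).
by rewrite /s dotZ dot_e mulVf.
Qed.

Lemma heisP p n (a : mat p n) : a \in heis p n ->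
  (forall i, a i i = 1) /\ (forall i j, i != j -> i != ord0 -> j != ord_max -> a i j = 0).
Proof.
rewrite inE => /forallP H; split => [i|i j hij hi hj].
  by move: (H i) => /forallP /(_ i) /andP [/implyP /(_ (eqxx _)) /eqP].
move: (H i) => /forallP /(_ j) /andP [_ /implyP h]; apply/eqP/h.
by rewrite hij hi hj.
Qed.

Lemma heis_col0 p n (a : mat p n) i : a \in heis p n -> a i ord0 = (i == ord0)%:R.
Proof.
move=> /heisP [h1 h2]; case: (i =P ord0) => [->|/eqP hi]; first by rewrite h1.
by rewrite h2 // eq_sym o0m.
Qed.

Lemma heis_mulv_mid p n (a : mat p n) (v : Xsp p n) i : a \in heis p n -> mid i ->
  (a *m v) i 0 = v i 0 + a i ord_max * v ord_max 0.
Proof.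
move=> /heisP [h1 h2] /andP [hi0 him]; rewrite mxE (bigD1 i) //= h1 mul1r.
rewrite (bigD1 ord_max) 1?eq_sym //= big1 ?addr0 // => j /andP [hji hjm].
by rewrite h2 ?mul0r // eq_sym.
Qed.

Lemma heis_mulv_max p n (a : mat p n) (v : Xsp p n) : a \in heis p n ->
  (a *m v) ord_max 0 = v ord_max 0.
Proof.
move=> /heisP [h1 h2]; rewrite mxE (bigD1 ord_max) //= h1 mul1r big1 ?addr0 // => j hj.
by rewrite h2 ?mul0r // 1?eq_sym // eq_sym o0m.
Qed.

Definition DD p n : mat p n := delta_mx ord0 ord_max.
Definition ht {p} n (t : 'F_p) : mat p n := 1%:M + t *: DD p n.

Lemma om_false n (i : 'I_n.+2) : (i == ord0) && (i == ord_max) = false.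
Proof. by case: (i =P ord0) => // ->; rewrite (negbTE (o0m n)). Qed.

Lemma ht_mul p n (s t : 'F_p) : ht n s *m ht n t = ht n (s + t).
Proof.
rewrite /ht mulmxDl !mulmxDr !mul1mx mulmx1 -!scalemxAl -!scalemxAr.
rewrite /DD mul_delta_mx_0 1?eq_sym ?o0m // !scaler0 addr0 scalerDl addrA.
by rewrite -!addrA; congr (_ + _); rewrite addrC.
Qed.

Lemma ht0 p n : ht n (0 : 'F_p) = 1%:M.
Proof. by rewrite /ht scale0r addr0. Qed.

Lemma one_heis p n : (1%:M : mat p n) \in heis p n.
Proof.
rewrite inE; apply/forallP => i; apply/forallP => j; rewrite !mxE.
by case: (i =P j) => [->|/eqP h] /=; rewrite ?eqxx ?implybT.
Qed.

Lemma ht_heisH p n (t : 'F_p) : ht n t \in heisH p n.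
Proof.
rewrite inE; apply/andP; split; rewrite ?inE; apply/forallP => i; apply/forallP => j;
  rewrite !mxE.
  case: (i =P j) => [->|/eqP h] /=; first by rewrite om_false mulr0 addr0 eqxx.
  by apply/implyP => /andP [hi _]; rewrite (negbTE hi) mulr0 addr0.
case: (i =P j) => [->|/eqP h] //=; apply/implyP => /negbTE ->; by rewrite mulr0 addr0.
Qed.

Lemma heisH_ht p n (h : mat p n) : h \in heisH p n -> h = ht n (h ord0 ord_max).
Proof.
rewrite inE => /andP [/heisP [h1 _] /forallP H]; apply/matrixP => i j; rewrite !mxE.
case: (i =P j) => [->|/eqP hij] /=; first by rewrite h1 om_false mulr0 addr0.
case e: ((i == ord0) && (j == ord_max)).
  by case/andP: e => /eqP -> /eqP ->; rewrite mulr1 add0r.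
move: (H i) => /forallP /(_ j) /implyP; rewrite hij e mulr0 addr0 => /(_ isT) /eqP ->.
by [].
Qed.

Lemma mulD p n (a : mat p n) : a \in heis p n -> a *m DD p n = DD p n.
Proof.
move=> ha; apply/matrixP => i j; rewrite !mxE (bigD1 ord0) //= big1 ?addr0.
  by rewrite !mxE eqxx heis_col0 //; case: (i == ord0); case: (j == ord_max);
    rewrite ?mul1r ?mul0r.
by move=> k hk; rewrite mxE (negbTE hk) mulr0.
Qed.

Lemma coset_eq p n (a b : mat p n) t : b = a *m ht n t -> Defs.lcoset a = Defs.lcoset b.
Proof.
move=> hb; apply/setP => x; apply/imsetP/imsetP => [[h hH ->]|[h hH ->]].
  exists (ht n (- t) *m h).
    by rewrite (heisH_ht hH) ht_mul ht_heisH.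
  by rewrite hb !mulmxA -(mulmxA a) ht_mul addrN ht0 mulmx1.
exists (ht n t *m h); first by rewrite (heisH_ht hH) ht_mul ht_heisH.
by rewrite hb mulmxA.
Qed.

Lemma data_eq p n (a b : mat p n) : a \in heis p n -> b \in heis p n ->
  (forall i, mid i -> a i ord_max = b i ord_max) ->
  (forall j, mid j -> a ord0 j = b ord0 j) ->
  b = a *m ht n (b ord0 ord_max - a ord0 ord_max).
Proof.
move=> ha hb hc hr; rewrite /ht mulmxDr mulmx1 -scalemxAr mulD //.
move: (heisP ha) (heisP hb) => [a1 a2] [b1 b2].
apply/matrixP => i j; rewrite !mxE.
case: (i =P j) => [->|/eqP hij]; first by rewrite a1 b1 om_false mulr0 addr0.
case: (i =P ord0) => [ei|/eqP hi0].
  subst i; case: (j =P ord_max) => [->|/eqP hjm] /=.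
    by rewrite mulr1 addrC subrK.
  by rewrite mulr0 addr0 hr // /mid eq_sym hij hjm.
rewrite /= mulr0 addr0; case: (j =P ord_max) => [ej|/eqP hjm].
  by subst j; rewrite hc // /mid hi0 hij.
by rewrite a2 ?b2.
Qed.

Lemma isqrt (r : algC) : 0 < r ->
  ((sqrtC r)^-1)^* = (sqrtC r)^-1 /\ (sqrtC r)^-1 * (sqrtC r)^-1 * r = 1.
Proof.
move=> hr; split.
  by apply: conj_Creal; apply: ger0_real; rewrite invr_ge0 sqrtC_ge0 ltW.
by rewrite -expr2 exprVn sqrtCK mulVf // gt_eqF.
Qed.

Lemma sum_indic (T : finType) (a b : T) :
  \sum_x ((x == a)%:R * (x == b)%:R : algC) = (a == b)%:R.
Proof.
rewrite (bigD1 a) //= big1 ?addr0 => [|x /negbTE ->]; last by rewrite mul0r.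
by rewrite eqxx mul1r.
Qed.

Lemma sum_enum (T : finType) (F : T -> algC) :
  \sum_(k : 'I_#|T|) F (enum_val k) = \sum_x F x.
Proof.
rewrite (reindex enum_rank) /=; last by exists enum_val => x _; rewrite ?enum_rankK ?enum_valK.
by apply: eq_bigr => x _; rewrite enum_rankK.
Qed.

Definition NN p n := #|Xsp p n|.
Definition Ix p n := (Xsp p n * 'I_(NN p n))%type.
Definition lbl {p n} (k : 'I_(NN p n)) : Xsp p n := enum_val k.
Definition dd p n : algC := (sqrtC (NN p n)%:R)^-1.

Definition UU p n (y x : Ix p n) : algC :=
  dd p n * ((y.1 == x.1 - Mv (lbl x.2))%:R * phi (dot (lbl y.2) (lbl x.2))).

Lemma NN_gt0 p n : (0 < NN p n)%N.
Proof. by apply/card_gt0P; exists 0. Qed.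

Lemma charsum_full p n (w : Xsp p n) :
  \sum_(l : Xsp p n) phi (dot l w) = (w == 0)%:R * (NN p n)%:R.
Proof.
case: (w =P 0) => [->|/eqP hw]; last by rewrite charsum // mul0r.
rewrite mul1r (eq_bigr (fun _ => 1)) => [|l _]; last by rewrite dot0 phi0.
by rewrite sumr_const /NN.
Qed.

Lemma dotN p n (u v : Xsp p n) : dot u (- v) = - dot u v.
Proof. by rewrite -scaleN1r dotZ mulN1r. Qed.

Lemma UU_unitary p n : q_unitary (@UU p n).
Proof.
move=> [i1 i2] [j1 j2] /=.
have hN : 0 < (NN p n)%:R :> algC by rewrite ltr0n NN_gt0.
have [dc dsq] := isqrt hN.
rewrite /UU /=.
set A := i1 - Mv (lbl i2); set B := j1 - Mv (lbl j2).
have e : forall k : Ix p n,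
  (dd p n * ((k.1 == A)%:R * phi (dot (lbl k.2) (lbl i2))))^* *
  (dd p n * ((k.1 == B)%:R * phi (dot (lbl k.2) (lbl j2)))) =
  ((k.1 == A)%:R * (k.1 == B)%:R) *
  (dd p n * dd p n * phi (dot (lbl k.2) (lbl j2 - lbl i2))).
  move=> k; rewrite !rmorphM /= conjC_nat phi_conj /dd dc dotD dotN addrC phiD; ring.
rewrite (eq_bigr _ (fun k _ => e k)).
rewrite -(pair_bigA _ (fun k1 k2 => ((k1 == A)%:R * (k1 == B)%:R) *
  (dd p n * dd p n * phi (dot (lbl k2) (lbl j2 - lbl i2))))) /=.
under eq_bigr do rewrite -mulr_sumr.
rewrite -mulr_suml sum_indic -mulr_sumr.
rewrite (sum_enum (fun l => phi (dot l (lbl j2 - lbl i2)))) charsum_full.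
rewrite subr_eq0 (inj_eq enum_val_inj) [j2 == i2]eq_sym xpair_eqE.
have [e2|ne2] := eqVneq i2 j2; last by rewrite andbF mul0r !mulr0.
subst j2; rewrite andbT mul1r /A /B (inj_eq (addIr _)).
by rewrite /dd dsq mulr1.
Qed.

Lemma heis_unit p n (a : mat p n) : a \in heis p n -> a \in unitmx.
Proof.
move=> /heisP [h1 h2]; rewrite unitmxE -det_tr det_trig.
  rewrite (eq_bigr (fun _ => 1)) ?big1_eq ?unitr1 // => i _; by rewrite mxE h1.
apply/is_trig_mxP => i j hij; rewrite mxE h2 //.
- by rewrite -(inj_eq val_inj) /= gtn_eqF.
- by rewrite -(inj_eq val_inj) /= -lt0n (leq_ltn_trans _ hij).
- by rewrite -(inj_eq val_inj) /= ltn_eqF // (leq_trans hij) // -ltnS.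
Qed.

Lemma heis_inj p n (a : mat p n) : a \in heis p n -> injective (fun v : Xsp p n => a *m v).
Proof. by move=> /heis_unit ha; apply: can_inj (mulKmx ha). Qed.

Lemma eqpair (T1 T2 : eqType) (k : T1 * T2) x y : (k == (x, y)) = (k.1 == x) && (k.2 == y).
Proof. by case: k. Qed.

Lemma piI_unitary p n N (a : mat p n) : a \in heis p n -> q_unitary (@piI p n N a).
Proof.
move=> ha [i1 i2] [j1 j2]; rewrite /piI /=.
under eq_bigr do rewrite conjC_nat -!eqpair.
by rewrite sum_indic xpair_eqE (inj_eq (heis_inj ha)) -xpair_eqE.
Qed.

Lemma unitary_dotp (T : finType) (U : T -> T -> algC) v :
  q_unitary U -> dotp (opapp U v) (opapp U v) = dotp v v.
Proof.
move=> hU; rewrite /dotp /opapp.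
transitivity (\sum_i \sum_j \sum_k (((U i j)^* * U i k) * ((v j)^* * v k))).
  apply: eq_bigr => i _; rewrite rmorph_sum mulr_suml; apply: eq_bigr => j _.
  rewrite mulr_sumr; apply: eq_bigr => k _; rewrite rmorphM /=; ring.
rewrite exchange_big; apply: eq_bigr => j _; rewrite exchange_big.
rewrite (bigD1 j) //= -mulr_suml hU eqxx mul1r big1 ?addr0 // => k hk.
by rewrite -mulr_suml hU eq_sym (negbTE hk) mul0r.
Qed.

Lemma shift_vec p n (a : mat p n) i (l : Xsp p n) : a \in heis p n -> mid i ->
  l i 0 != a ord0 i ->
  exists s : Xsp p n, [/\ a *m s = Mv s, s ord_max 0 = 0 & s ord0 0 + dot l (Mv s) = 1].
Proof.
move=> ha hi hl; have [h1 h2] := heisP ha.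
move: (hi) => /andP [hi0 him].
set r := (l i 0 - a ord0 i)^-1; set t := - (r * a ord0 i).
have hr : r * (l i 0 - a ord0 i) = 1 by rewrite mulVf // subr_eq0.
exists (t *: delta_mx ord0 0 + r *: delta_mx i 0).
have eM : Mv (t *: delta_mx ord0 0 + r *: delta_mx i 0 : Xsp p n) = r *: delta_mx i 0.
  by rewrite MvD !MvZ Mv_e0 Mv_ei // scaler0 add0r.
split.
- rewrite eM mulmxDr -!scalemxAr -!colE; apply/matrixP => k j; rewrite ord1 !mxE.
  rewrite heis_col0 //; case: (k =P ord0) => [->|/eqP hk0].
    by rewrite eq_sym (negbTE hi0) mulr1 mulr0 /t addNr.
  rewrite /= mulr0 add0r; case: (k =P i) => [->|/eqP hki]; first by rewrite h1 eqxx.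
  by rewrite h2 // (negbTE hki) mulr0.
- by rewrite !mxE eq_sym (negbTE (o0m n)) /= eq_sym (negbTE him) !mulr0 addr0.
- rewrite eM dotZ dot_e !mxE eqxx /= eq_sym (negbTE hi0) mulr1 mulr0 addr0 /t.
  by rewrite -hr mulrBr addrC.
Qed.

Definition psi0 p n (x : Ix p n) : algC :=
  ((x.1 ord_max 0 == 1) && (lbl x.2 == Mv x.1))%:R * phi (x.1 ord0 0).
Definition nrm (T : finType) (v : T -> algC) : algC := (sqrtC (dotp v v))^-1.
Definition psi p n : Ix p n -> algC := fun x => nrm (@psi0 p n) * psi0 x.

Lemma dotp_ge0 (T : finType) (v : T -> algC) : 0 <= dotp v v.
Proof. by apply: sumr_ge0 => i _; rewrite mulrC mul_conjC_ge0. Qed.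

Lemma normalize (T : finType) (v : T -> algC) : 0 < dotp v v ->
  q_unit_vec (fun x => nrm v * v x).
Proof.
move=> hv; have [c1 c2] := isqrt hv; rewrite /q_unit_vec {1}/dotp /nrm.
under eq_bigr do rewrite rmorphM /= c1 mulrACA.
by rewrite -mulr_sumr.
Qed.

Lemma psi0_pos p n : 0 < dotp (@psi0 p n) (@psi0 p n).
Proof.
pose v : Xsp p n := delta_mx ord_max 0.
rewrite /dotp (bigD1 (v, enum_rank (Mv v))) //=.
have -> : psi0 (v, enum_rank (Mv v)) = 1.
  by rewrite /psi0 /lbl /= enum_rankK !mxE !eqxx /= mul1r phi0.
rewrite conjC1 mul1r; apply: (lt_le_trans ltr01); rewrite lerDl.
by apply: sumr_ge0 => i _; rewrite mulrC mul_conjC_ge0.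
Qed.

Lemma psi_unit p n : q_unit_vec (@psi p n).
Proof. exact: normalize (psi0_pos p n). Qed.

Definition us p n (a : mat p n) : Ix p n -> algC :=
  opapp (@UU p n) (opapp (@piI p n (NN p n) a) (@psi p n)).

Definition fterm p n (a : mat p n) (y : Ix p n) (x : Ix p n * Ix p n) : algC :=
  UU y x.1 * (@piI p n (NN p n) a x.1 x.2 * psi x.2).

Lemma us_sum p n (a : mat p n) y : us a y = \sum_x fterm a y x.
Proof.
rewrite /us /opapp; under eq_bigr do rewrite mulr_sumr.
by rewrite pair_bigA.
Qed.

Lemma fterm_nz p n (a : mat p n) w k x : fterm a (w, k) x != 0 ->
  [/\ w = x.1.1 - Mv (lbl x.1.2), x.1.1 = a *m x.2.1, x.1.2 = x.2.2,
      x.2.1 ord_max 0 = 1 & lbl x.2.2 = Mv x.2.1].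
Proof.
case: x => [[j1 j2] [i1 i2]]; rewrite /fterm /UU /piI /psi /psi0 /=.
rewrite !mulf_eq0 !pnatr_eq0 !eqb0 !negb_or !negbK.
case/and5P => /and3P [_ /eqP e1 _] /andP [/eqP e2 /eqP e3] _ /andP [/eqP e4 /eqP e5] _.
by split.
Qed.

Lemma us_support p n (a : mat p n) w k : a \in heis p n -> us a (w, k) != 0 ->
  (forall i, mid i -> w i 0 = a i ord_max) /\ (forall i, mid i -> lbl k i 0 = a ord0 i).
Proof.
move=> ha; rewrite us_sum => hs; split => i hi; apply/eqP; apply: contraNT hs => hne.
  apply/eqP/big1 => x _; apply/eqP; apply: contraNT hne => /fterm_nz [e1 e2 e3 e4 e5].
  rewrite e1 e2 e3 e5 MvM; rewrite [X in X == _]mxE heis_mulv_mid // e4 mulr1 !mxE hi.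
  by rewrite addrAC subrr add0r.
have [s [s1 s2 s3]] := shift_vec ha hi hne.
apply/eqP; apply: (@shift_zero p _ _ (fun x =>
  ((x.1.1 + a *m s, enum_rank (lbl x.1.2 + Mv s)), (x.2.1 + s, enum_rank (lbl x.2.2 + Mv s))))).
  move=> [[j1 j2] [i1 i2]] [[j1' j2'] [i1' i2']] /=.
  by case=> /addIr -> /enum_rank_inj/addIr/enum_val_inj -> /addIr -> /enum_rank_inj/addIr/enum_val_inj ->.
move=> [[j1 j2] [i1 i2]]; rewrite /fterm /UU /piI /psi /psi0 /lbl /= !enum_rankK.
have q1 : j1 + a *m s - Mv (enum_val j2 + Mv s) = j1 - Mv (enum_val j2).
  by rewrite MvD MvM s1 opprD addrACA subrr addr0.
have q2 : (j1 + a *m s == a *m (i1 + s)) = (j1 == a *m i1).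
  by rewrite mulmxDr (inj_eq (addIr _)).
have q3 : (enum_rank (enum_val j2 + Mv s) == enum_rank (enum_val i2 + Mv s)) = (j2 == i2).
  by rewrite (inj_eq enum_rank_inj) (inj_eq (addIr _)) (inj_eq enum_val_inj).
have q4 : (i1 + s) ord_max 0 = i1 ord_max 0 by rewrite mxE s2 addr0.
have q5 : (enum_val i2 + Mv s == Mv (i1 + s)) = (enum_val i2 == Mv i1).
  by rewrite MvD (inj_eq (addIr _)).
have q6 : (i1 + s) ord0 0 = i1 ord0 0 + s ord0 0 by rewrite mxE.
rewrite q1 q2 q3 q4 q5 q6 dotD !phiD -s3 phiD /lbl; ring.
Qed.

Definition gg p n (i : Ix p n) : {set mat p n} :=
  if [pick b in heis p n | us b i != 0] is Some b then Defs.lcoset b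
  else Defs.lcoset (1%:M : mat p n).

Definition EE p n (c : {set mat p n}) (i j : Ix p n) : algC :=
  ((i == j) && (gg i == c))%:R.

Lemma gg_in p n (i : Ix p n) : gg i \in cosetsH p n.
Proof.
rewrite /gg; case: pickP => [b /andP [hb _]|_]; apply/imsetP.
  by exists b.
by exists 1%:M; rewrite ?one_heis.
Qed.

Lemma gg_eq p n (a : mat p n) i : a \in heis p n -> us a i != 0 -> gg i = Defs.lcoset a.
Proof.
move=> ha hi; rewrite /gg; case: pickP => [b /andP [hb hbi] | H]; last first.
  by move: (H a); rewrite ha hi.
case: i hi hbi => w k hi hbi.
have [ya xa] := us_support ha hi; have [yb xb] := us_support hb hbi.
symmetry; apply: coset_eq (data_eq ha hb _ _) => j hj.
  by rewrite -ya // yb.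
by rewrite -xa // xb.
Qed.

Lemma opapp_EE p n c (v : Ix p n -> algC) i : opapp (EE c) v i = (gg i == c)%:R * v i.
Proof.
rewrite /opapp (bigD1 i) //= /EE eqxx /= big1 ?addr0 // => j hj.
by rewrite eq_sym (negbTE hj) mul0r.
Qed.

Lemma EE_povm p n : q_povm (cosetsH p n) (@EE p n).
Proof.
split.
  move=> c _ v; rewrite /dotp; apply: sumr_ge0 => i _; rewrite opapp_EE mulrCA.
  by apply: mulr_ge0; rewrite ?ler0n // mulrC mul_conjC_ge0.
move=> i j; rewrite /EE; case: (i =P j) => [->|_] /=; last by rewrite big1.
rewrite (bigD1 (gg j)) ?gg_in //= eqxx big1 ?addr0 // => c /andP [_ hc].
by rewrite eq_sym (negbTE hc).
Qed.

Lemma us_norm p n (a : mat p n) : a \in heis p n -> dotp (us a) (us a) = 1.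
Proof.
move=> ha; rewrite /us (unitary_dotp _ (@UU_unitary p n)) (unitary_dotp _ (@piI_unitary p n (NN p n) a ha)).
exact: psi_unit.
Qed.

Lemma succ_a p n (a : mat p n) : a \in heis p n ->
  dotp (us a) (opapp (EE (Defs.lcoset a)) (us a)) = 1.
Proof.
move=> ha; rewrite -(us_norm ha); apply: eq_bigr => i _; rewrite opapp_EE.
have [->|hi] := eqVneq (us a i) 0; first by rewrite !mulr0.
by rewrite (gg_eq ha hi) eqxx mul1r.
Qed.

Unset Implicit Arguments.

Theorem theorem20 (p n : nat) (hp : prime p) (hn : (1 <= n)%N) :
  exists (N : nat) (psi : (Xsp p n * 'I_N) -> algC)
         (U : (Xsp p n * 'I_N) -> (Xsp p n * 'I_N) -> algC)
         (E : {set mat p n} -> (Xsp p n * 'I_N) -> (Xsp p n * 'I_N) -> algC),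
    [/\ (1 <= N)%N, q_unit_vec psi, q_unitary U,
        q_povm (cosetsH p n) E & success_prob psi U E = 1].
Proof.
exists (NN p n), (@psi p n), (@UU p n), (@EE p n); split.
- exact: NN_gt0.
- exact: psi_unit.
- exact: UU_unitary.
- exact: EE_povm.
rewrite /success_prob (eq_bigr (fun _ => 1)) => [|a ha]; last exact: succ_a.
rewrite sumr_const mulVf //; rewrite pnatr_eq0 -lt0n.
by apply/card_gt0P; exists 1%:M; rewrite one_heis.
Qed.
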